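(* Fix $\alpha>0$, $\gamma>0$, $\Sigma_\epsilon>0$, $\omega_1\in[0,1)$, $\omega_2\in[0,1]$. Let $$T(x)=\left(\frac{\omega_2}{x^2}+\frac{(1-\omega_2)\alpha^2\gamma^2\Sigma_\epsilon}{(1+\gamma-x)^2}\right)^{-1/2},\qquad f_y(x)=\left(\frac{\omega_1}{x^2}+\frac{(1-\omega_1)\gamma^2\alpha^2\Sigma_\epsilon}{(1+\gamma-y)^2}\right)^{-1/2}.$$ Let $(\lambda_{2,t})_{t\in\mathbb Z}$ be a bi-infinite orbit of $T$ (i.e. $T(\lambda_{2,t})=\lambda_{2,t+1}$ for all $t\in\mathbb Z$) contained in a compact $T$-invariant interval $J\subset[1,1+\gamma)$. For $\lambda_{1,0},\lambda_{1,0}'\in[1,\infty)$ define $\lambda_{1,t+1}=f_{\lambda_{2,t}}(\lambda_{1,t})$ and $\lambda'_{1,t+1}=f_{\lambda_{2,t}}(\lambda'_{1,t})$ for $t\ge0$. Then $$\lim_{n\to\infty}|\lambda_{1,n}-\lambda'_{1,n}|=0.$$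
   Context: This is the case $\pi_1=0$ of the two-bank leverage model: bank 2 (the large, forcing bank) evolves autonomously by the unimodal map $T$, and bank 1 (the small, forced bank) evolves by the skew product $\lambda_{1,t+1}=f_{\lambda_{2,t}}(\lambda_{1,t})$, $\lambda_{2,t+1}=T(\lambda_{2,t})$. The space of bi-infinite $T$-orbits is the natural (invertible) extension $\hat I$ of $T$. *)

(* Defs.v *)
From Stdlib Require Import Reals ZArith.
Open Scope R_scope.

(* x^(-1/2) written as 1 / sqrt x (argument positive in all relevant cases). *)
Definition Tmap (alpha gamma Sigma omega2 : R) (x : R) : R :=
  / sqrt (omega2 / x ^ 2
          + (1 - omega2) * alpha ^ 2 * gamma ^ 2 * Sigma / (1 + gamma - x) ^ 2).

Definition fmap (alpha gamma Sigma omega1 : R) (y x : R) : R :=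
  / sqrt (omega1 / x ^ 2
          + (1 - omega1) * gamma ^ 2 * alpha ^ 2 * Sigma / (1 + gamma - y) ^ 2).

Fixpoint forced (alpha gamma Sigma omega1 : R) (lam2 : Z -> R) (l0 : R) (n : nat) : R :=
  match n with
  | O => l0
  | S k => fmap alpha gamma Sigma omega1 (lam2 (Z.of_nat k))
             (forced alpha gamma Sigma omega1 lam2 l0 k)
  end.

(* Main.v *)
Require Import Defs.
From Stdlib Require Import Reals ZArith Lra Lia.
Open Scope R_scope.
Lemma inv_sqrt_diff K A B : 0 < K -> K <= A -> K <= B ->
  Rabs (/ sqrt A - / sqrt B) <= Rabs (A - B) * / (2 * K * sqrt K).
Proof.
  intros HK HA HB.
  assert (hs : 0 < sqrt K) by (apply sqrt_lt_R0; lra).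
  assert (hsA : sqrt K <= sqrt A) by (apply sqrt_le_1_alt; lra).
  assert (hsB : sqrt K <= sqrt B) by (apply sqrt_le_1_alt; lra).
  assert (eA : sqrt A * sqrt A = A) by (apply sqrt_sqrt; lra).
  assert (eB : sqrt B * sqrt B = B) by (apply sqrt_sqrt; lra).
  assert (eK : sqrt K * sqrt K = K) by (apply sqrt_sqrt; lra).
  set (sA := sqrt A) in *. set (sB := sqrt B) in *. set (s := sqrt K) in *.
  assert (E : / sA - / sB = (B - A) * / (sA * sB * (sA + sB))).
  { rewrite <- eA, <- eB. clearbody sA sB s. assert (sA <> 0) by lra. assert (sB <> 0) by lra. assert (sA + sB <> 0) by lra. field; auto. }
  rewrite E, Rabs_minus_sym, Rabs_mult, (Rabs_pos_eq (/ _)).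
  2: { apply Rlt_le, Rinv_0_lt_compat. assert (0 < sA * sB) by (apply Rmult_lt_0_compat; lra). apply Rmult_lt_0_compat; lra. }
  apply Rmult_le_compat_l; [apply Rabs_pos|].
  apply Rinv_le_contravar.
  - rewrite <- eK. assert (0 < s*s) by (apply Rmult_lt_0_compat; lra). apply Rmult_lt_0_compat; lra.
  - rewrite <- eK. 
    assert (s * s <= sA * sB) by (apply Rmult_le_compat; lra).
    assert (0 <= s*s) by nra. nra.
Qed.

Lemma step_lemma w x c : 0 < x -> 0 < c -> 0 <= w ->
  0 < / sqrt (w / x^2 + c) /\ / (/ sqrt (w / x^2 + c))^2 = w * / x^2 + c.
Proof.
  intros Hx Hc Hw.
  assert (0 < x^2) by (apply pow_lt; lra).
  assert (0 <= w / x^2) by (unfold Rdiv; apply Rmult_le_pos; [lra| left; apply Rinv_0_lt_compat; lra]).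
  set (A := w / x ^ 2 + c).
  assert (0 < A) by (unfold A; lra).
  assert (Hs : 0 < sqrt A) by (apply sqrt_lt_R0; lra).
  assert (E : sqrt A * sqrt A = A) by (apply sqrt_sqrt; lra).
  split. apply Rinv_0_lt_compat; lra.
  change (w * / x^2 + c) with A. rewrite <- E at 2.
  field. lra.
Qed.

Theorem mainTheorem2 (alpha gamma Sigma omega1 omega2 : R)
  (Halpha : 0 < alpha) (Hgamma : 0 < gamma) (HSigma : 0 < Sigma)
  (Hw1 : 0 <= omega1 < 1) (Hw2 : 0 <= omega2 <= 1)
  (a b : R) (HJ : 1 <= a <= b) (HJb : b < 1 + gamma)
  (HJinv : forall x, a <= x <= b ->
     a <= Tmap alpha gamma Sigma omega2 x <= b)
  (lam2 : Z -> R)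
  (Horbit : forall t : Z, Tmap alpha gamma Sigma omega2 (lam2 t) = lam2 (t + 1)%Z)
  (HinJ : forall t : Z, a <= lam2 t <= b)
  (l0 l0' : R) (Hl0 : 1 <= l0) (Hl0' : 1 <= l0') :
  Un_cv (fun n => Rabs (forced alpha gamma Sigma omega1 lam2 l0 n
                        - forced alpha gamma Sigma omega1 lam2 l0' n)) 0.
Proof.
  set (K := (1 - omega1) * alpha ^ 2 * Sigma).
  assert (HK : 0 < K).
  { unfold K. apply Rmult_lt_0_compat; [apply Rmult_lt_0_compat|]; try lra.
    apply pow_lt; lra. }
  set (cc := fun t : nat => (1 - omega1) * gamma ^ 2 * alpha ^ 2 * Sigma / (1 + gamma - lam2 (Z.of_nat t)) ^ 2).
  assert (Hcc : forall t, K <= cc t).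
  { intro t. unfold cc, K. destruct (HinJ (Z.of_nat t)) as [h1 h2].
    set (y := lam2 (Z.of_nat t)) in *. set (d := 1 + gamma - y).
    assert (0 < d) by (unfold d; lra). assert (d <= gamma) by (unfold d; lra).
    assert (0 < d^2) by (apply pow_lt; lra).
    assert (d^2 <= gamma^2) by (simpl; nra).
    apply (Rmult_le_reg_r (d^2)); auto.
    replace ((1 - omega1) * gamma ^ 2 * alpha ^ 2 * Sigma / d ^ 2 * d ^ 2) with ((1 - omega1) * gamma ^ 2 * alpha ^ 2 * Sigma) by (field; lra).
    replace ((1 - omega1) * gamma ^ 2 * alpha ^ 2 * Sigma) with (((1 - omega1) * alpha ^ 2 * Sigma) * gamma^2) by ring.
    apply Rmult_le_compat_l; auto. fold K. lra. }
  assert (pos : forall l, 1 <= l -> forall n, 0 < forced alpha gamma Sigma omega1 lam2 l n).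
  { intros l Hl n. induction n as [|n IH]; [simpl; lra|].
    simpl forced. fold (cc n).
    assert (0 < cc n) by (specialize (Hcc n); lra).
    exact (proj1 (step_lemma omega1 _ (cc n) IH H ltac:(lra))). }
  assert (rec : forall l, 1 <= l -> forall n,
     / (forced alpha gamma Sigma omega1 lam2 l (S n))^2
       = omega1 * / (forced alpha gamma Sigma omega1 lam2 l n)^2 + cc n).
  { intros l Hl n. simpl forced at 1. fold (cc n).
    assert (0 < cc n) by (specialize (Hcc n); lra).
    exact (proj2 (step_lemma omega1 _ (cc n) (pos l Hl n) H ltac:(lra))). }
  set (x := forced alpha gamma Sigma omega1 lam2 l0) in *.
  set (x' := forced alpha gamma Sigma omega1 lam2 l0') in *.
  assert (Hd : forall n, / x n ^ 2 - / x' n ^ 2 = omega1 ^ n * (/ x 0%nat ^ 2 - / x' 0%nat ^ 2)).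
  { induction n as [|n IH]; [simpl; ring|].
    unfold x, x'. rewrite (rec l0 Hl0 n), (rec l0' Hl0' n). fold x x'.
    change (omega1 ^ S n) with (omega1 * omega1 ^ n). rewrite Rmult_assoc, <- IH. ring. }
  set (d0 := / x 0%nat ^ 2 - / x' 0%nat ^ 2) in *.
  set (M := / (2 * K * sqrt K)).
  assert (HM : 0 < M).
  { unfold M. apply Rinv_0_lt_compat. assert (0 < sqrt K) by (apply sqrt_lt_R0; lra).
    apply Rmult_lt_0_compat; lra. }
  intros eps Heps.
  assert (Hy : 0 < eps / (M * (Rabs d0 + 1))).
  { unfold Rdiv. apply Rmult_lt_0_compat; auto. apply Rinv_0_lt_compat.
    apply Rmult_lt_0_compat; auto. pose proof (Rabs_pos d0); lra. }
  assert (Hw : Rabs omega1 < 1) by (rewrite Rabs_pos_eq; lra).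
  destruct (pow_lt_1_zero omega1 Hw _ Hy) as [N HN].
  exists (S N). intros n Hn. destruct n as [|n]; [lia|].
  unfold R_dist. rewrite Rminus_0_r, Rabs_Rabsolu.
  assert (HA : forall xx, 0 < xx -> K <= omega1 / xx ^ 2 + cc n).
  { intros xx Hxx. assert (0 < xx^2) by (apply pow_lt; lra).
    assert (0 <= omega1 / xx^2) by (unfold Rdiv; apply Rmult_le_pos; [lra| left; apply Rinv_0_lt_compat; lra]).
    specialize (Hcc n). lra. }
  change (x (S n)) with (/ sqrt (omega1 / x n ^ 2 + cc n)).
  change (x' (S n)) with (/ sqrt (omega1 / x' n ^ 2 + cc n)).
  eapply Rle_lt_trans; [apply (inv_sqrt_diff K); [exact HK | apply HA, pos, Hl0 | apply HA, pos, Hl0']|].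
  fold M.
  replace (omega1 / x n ^ 2 + cc n - (omega1 / x' n ^ 2 + cc n)) with (omega1 ^ S n * d0).
  2: { change (omega1 ^ S n) with (omega1 * omega1 ^ n). rewrite Rmult_assoc, <- Hd. unfold Rdiv. ring. }
  specialize (HN (S n) ltac:(lia)).
  rewrite Rabs_mult.
  assert (Hp := Rabs_pos d0). assert (Hp2 := Rabs_pos (omega1 ^ S n)).
  apply (Rmult_lt_compat_r (M * (Rabs d0 + 1))) in HN; [|apply Rmult_lt_0_compat; lra].
  unfold Rdiv in HN. rewrite Rmult_assoc, Rinv_l, Rmult_1_r in HN.
  2: { apply Rgt_not_eq, Rmult_lt_0_compat; lra. }
  nra.
Qed.
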